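(* Let $\zeta:[\sigma,\tau]\to\mathbb R$ be a continuous, strictly increasing, Lipschitz function with $\zeta(\sigma)=0$, and let $F\subset[\sigma,\tau]$ be closed with $\sigma,\tau\in F$ and $\lambda(F)=0$. Then $\lambda(\sqrt{\zeta}(F))=0$, where $\sqrt{\zeta}(x):=\sqrt{\zeta(x)}$ for $x\in[\sigma,\tau]$.
   Context: $\lambda$ denotes Lebesgue measure on $\mathbb R$. *)

(* Defs.v *)
From HB Require Import structures.
From mathcomp Require Import all_boot all_order all_algebra.
From mathcomp Require Import all_classical all_reals all_analysis.

(* Main.v *)
Require Import Defs.
From HB Require Import structures.
From mathcomp Require Import all_boot all_order all_algebra.
From mathcomp Require Import all_classical all_reals all_analysis.
From mathcomp Require Import measurable_realfun lebesgue_measure lebesgue_stieltjes_measure.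
From mathcomp Require Import lra ring.
Import Order.TTheory GRing.Theory Num.Theory.
Import numFieldNormedType.Exports.
Local Open Scope classical_set_scope.
Local Open Scope ring_scope.

Section S.
Context {R : realType}.
Let mu := (@lebesgue_measure R).
Let l := (@wlength R idfun).

Lemma muE (A : set R) : mu A = (l^* A)%mu.
Proof. by []. Qed.

Lemma muU2 (A B : set R) : (mu (A `|` B) <= mu A + mu B)%E.
Proof. rewrite !muE. exact: outer_measureU2. Qed.

Lemma mu_sub (A B : set R) : A `<=` B -> (mu A <= mu B)%E.
Proof. rewrite !muE; exact: (le_outer_measure (l^*)%mu). Qed.

Lemma mu_sigma (F : (set R)^nat) : (mu (\bigcup_n F n) <= \sum_(n <oo) mu (F n))%E.
Proof. rewrite muE. exact: outer_measure_sigma_subadditive. Qed.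

Lemma mu_ge0 (A : set R) : (0 <= mu A)%E.
Proof. rewrite muE; exact: outer_measure_ge0. Qed.

Lemma null_image (A D : set R) (g : R -> R) (k : R) : 0 < k -> D `<=` A ->
  (forall x y, A x -> A y -> `|g x - g y| <= k * `|x - y|) ->
  mu D = 0%E -> mu (g @` D) = 0%E.
Proof.
move=> k0 DA gL mD0.
apply/eqP; rewrite eq_le mu_ge0 andbT; apply/lee_addgt0Pr => e e0; rewrite add0e.
have eps0 : 0 < e / (2 * k) by rewrite divr_gt0 // mulr_gt0.
have : (l^* D)%mu \is a fin_num by rewrite -muE mD0.
rewrite outer_measure_open_itv_cover => /lb_ereal_inf_adherent-/(_ _ eps0)[_ [F [Fitv DF] <-]].
rewrite -outer_measure_open_itv_cover -muE mD0 add0e => Fe.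
have GD : g @` D `<=` \bigcup_n (g @` (F n `&` D)).
  move=> _ [x Dx <-]; have [n _ Fnx] := DF x Dx.
  by exists n => //; exists x.
apply: le_trans; first exact: (mu_sub _ _ GD).  apply: le_trans; first exact: mu_sigma.
have key n : (mu (g @` (F n `&` D)) <= (2 * k)%:E * l (F n))%E.
  have [[a b] /= Fn] := Fitv n.
  rewrite Fn.
  case: (pselect (exists x, (`]a, b[ `&` D) x)) => [[x0 [Fx0 Dx0]]|nox]; last first.
    have -> : g @` (`]a, b[ `&` D) = set0.
      by apply/seteqP; split => // _ [x Fx <-]; exfalso; apply: nox; exists x.
    rewrite (_ : mu set0 = 0%E); last by rewrite muE; exact: outer_measure0.
    by rewrite mule_ge0 // ?lee_fin ?mulr_ge0 ?ltW //; exact: wlength_ge0.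
  move: Fx0; rewrite /= in_itv /= => /andP[ax0 x0b].
  have ab : a < b by exact: lt_trans ax0 x0b.
  have sub : g @` (`]a, b[ `&` D) `<=` `[g x0 - k * (b - a), g x0 + k * (b - a)].
    move=> _ [x [Fx Dx] <-]; move: Fx; rewrite /= in_itv /= => /andP[ax xb].
    have h : `|g x - g x0| <= k * (b - a).
      apply: (le_trans (gL _ _ (DA _ Dx) (DA _ Dx0))).
      rewrite ler_pM2l // ler_norml; apply/andP; split; lra.
    move: h; rewrite ler_norml => /andP[h1 h2].
    rewrite /= in_itv /=; apply/andP; split; lra.
  apply: le_trans; first exact: (mu_sub _ _ sub).
  rewrite /mu lebesgue_measure_itv /= lte_fin.
  have -> : g x0 - k * (b - a) < g x0 + k * (b - a).
    by rewrite ltrD2l gtrN // mulr_gt0 // subr_gt0.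
  rewrite /l wlength_itv /= lte_fin ab /= -EFinB -EFinM lee_fin.
  rewrite le_eqVlt; apply/orP; left; apply/eqP; ring.
apply: le_trans.
  apply: (lee_nneseries (v := fun n => ((2 * k)%:E * l (F n))%E)).
    by move=> n _ _; exact: mu_ge0.
  by move=> n _; exact: key.
rewrite nneseriesZl; last by move=> n _; exact: wlength_ge0.
apply: (@le_trans _ _ ((2 * k)%:E * (e / (2 * k))%:E)%E).
  rewrite lee_pmul2l //; last by rewrite lte_fin mulr_gt0.
  exact: (ltW Fe).
rewrite -EFinM lee_fin; rewrite le_eqVlt; apply/orP; left; apply/eqP; field; exact: lt0r_neq0.
Qed.

Lemma sqrt_lip (m a b : R) : 0 < m -> m <= a -> m <= b ->
  `|Num.sqrt a - Num.sqrt b| * Num.sqrt m <= `|a - b|.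
Proof.
move=> m0 ma mb.
have a0 : 0 <= a by apply: le_trans ma; exact: ltW.
have b0 : 0 <= b by apply: le_trans mb; exact: ltW.
have -> : a - b = (Num.sqrt a - Num.sqrt b) * (Num.sqrt a + Num.sqrt b).
  by rewrite mulrDr !mulrBl -!expr2 !sqr_sqrtr //; ring.
rewrite normrM [X in _ <= _ * X]ger0_norm; last by rewrite addr_ge0 ?sqrtr_ge0.
apply: ler_wpM2l => //.
apply: (@le_trans _ _ (Num.sqrt a)); first by rewrite ler_sqrt.
by rewrite lerDl sqrtr_ge0.
Qed.
End S.

Theorem lemma3p2 (R : realType) (sigma tau : R) (zeta : R -> R) (F : set R) :
  {within `[sigma, tau], continuous zeta} ->
  {in `[sigma, tau] &, forall x y, x < y -> zeta x < zeta y} ->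
  [lipschitz zeta x | x in `[sigma, tau]] ->
  zeta sigma = 0 ->
  closed F -> F `<=` `[sigma, tau] -> F sigma -> F tau ->
  (lebesgue_measure F = 0)%E ->
  (lebesgue_measure [set Num.sqrt (zeta x) | x in F] = 0)%E.
Proof.
move=> zc zmono zlip z0 Fcl Fsub Fs Ft F0.
have [K K0 zL] : exists2 K, 0 < K & forall x y, x \in `[sigma, tau] -> y \in `[sigma, tau] ->
    `|zeta x - zeta y| <= K * `|x - y|.
  have [M0 [_ HM]] := zlip.
  exists (`|M0| + 1); first by rewrite ltr_wpDl.
  move=> x y xI yI.
  have := HM (`|M0| + 1) _ (x, y).
  apply => //.
  by rewrite (le_lt_trans (ler_norm _)) // ltrDl.
have mu0 (A : set R) : (0 <= lebesgue_measure A)%E by exact: mu_ge0.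
have zge (x y : R) : x \in `[sigma, tau] -> y \in `[sigma, tau] -> x <= y -> zeta x <= zeta y.
  move=> xI yI; rewrite le_eqVlt => /orP[/eqP->//|xy].
  by apply: ltW; apply: zmono.
have sI : sigma \in `[sigma, tau] by exact: Fsub.
have z0I x : x \in `[sigma, tau] -> 0 <= zeta x.
  by move=> xI; rewrite -z0; apply: zge => //; move: xI; rewrite in_itv /= => /andP[].
case: (leP tau sigma) => [ts|st].
  apply/eqP; rewrite eq_le mu0 andbT.
  apply: (@le_trans _ _ (lebesgue_measure (`[0, 0]%classic : set R))).
    apply: mu_sub => _ [x Fx <-].
    have := Fsub _ Fx; rewrite /= in_itv /= => /andP[h1 h2].
    have -> : x = sigma by apply/eqP; rewrite eq_le h1 (le_trans h2 ts).
    by rewrite z0 sqrtr0 /= in_itv /= lexx.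
  by rewrite lebesgue_measure_itv /= ltxx.
apply/eqP; rewrite eq_le mu0 andbT; apply/lee_addgt0Pr => e e0; rewrite add0e.
have d0 : 0 < (e / 2) ^+ 2 by rewrite exprn_gt0 // divr_gt0.
have [_ zcs _] := (continuous_within_itvP zeta st).1 zc.
move: zcs; rewrite z0 => /cvgrPdist_lt/(_ _ d0) [r /= r0 Hr].
pose c := Num.min (sigma + r / 2) tau.
have sc : sigma < c by rewrite /c lt_min st andbT ltrDl divr_gt0.
have ct : c <= tau by rewrite /c ge_min lexx orbT.
have cI : c \in `[sigma, tau] by rewrite in_itv /= ct (ltW sc).
have cr : c < sigma + r.
  by rewrite /c gt_min ltrD2l ltr_pdivrMr // ltr_pMr // ltr1n.
have small x : x \in `[sigma, tau] -> x <= c -> Num.sqrt (zeta x) <= e / 2.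
  move=> xI xc.
  have zd : zeta x <= (e / 2) ^+ 2.
    move: (xI); rewrite in_itv /= => /andP[sx xt].
    move: sx; rewrite le_eqVlt => /orP[/eqP <-|sx]; first by rewrite z0 ltW.
    have hb : ball_ Num.Def.normr sigma r x.
      rewrite /ball_ /= ltr0_norm ?subr_lt0 // opprB.
      have := le_lt_trans xc cr; lra.
    by have := Hr x hb sx; rewrite sub0r normrN ger0_norm ?z0I // => /ltW.
  have -> : e / 2 = Num.sqrt ((e / 2) ^+ 2).
    by rewrite sqrtr_sqr ger0_norm // divr_ge0 // ltW.
  exact: ler_wsqrtr.
pose g := fun x => Num.sqrt (zeta x).
pose F1 := F `&` [set x | x <= c].
pose F2 := F `&` [set x | c <= x].
have sub : [set g x | x in F] `<=` g @` F1 `|` g @` F2.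
  move=> _ [x Fx <-]; case: (leP x c) => xc; [left|right]; exists x => //.
  by split => //; exact: ltW.
have m0 : 0 < zeta c by rewrite -z0; apply: zmono.
have h1 : (lebesgue_measure (g @` F1) <= (e / 2)%:E)%E.
  apply: (@le_trans _ _ (lebesgue_measure (`[0, e / 2]%classic : set R))).
    apply: mu_sub => _ [x [Fx xc] <-].
    by rewrite /= in_itv /= sqrtr_ge0 /=; apply: small => //; exact: Fsub.
  rewrite lebesgue_measure_itv /= lte_fin divr_gt0 //. by rewrite oppr0 adde0.
have h2 : lebesgue_measure (g @` F2) = 0%E.
  apply: (@null_image _ [set x | c <= x <= tau] _ _ (K / Num.sqrt (zeta c))).
  - by rewrite divr_gt0 // sqrtr_gt0.
  - move=> x [Fx cx] /=; rewrite cx /=.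
    by have := Fsub _ Fx; rewrite /= in_itv /= => /andP[].
  - move=> x y /= /andP[cx xt] /andP[cy yt].
    have xI : x \in `[sigma, tau] by rewrite in_itv /= xt andbT (le_trans (ltW sc)).
    have yI : y \in `[sigma, tau] by rewrite in_itv /= yt andbT (le_trans (ltW sc)).
    have := sqrt_lip _ _ _ m0 (zge _ _ cI xI cx) (zge _ _ cI yI cy).
    move=> /le_trans /(_ (zL _ _ xI yI)).
    rewrite -ler_pdivlMr ?sqrtr_gt0 // => h.
    by rewrite /g mulrAC.
  - apply/eqP; rewrite eq_le mu0 andbT -F0; apply: mu_sub => x [] //.
apply: le_trans; first exact: (mu_sub _ _ sub).
apply: le_trans; first exact: muU2.
rewrite h2 adde0; apply: (le_trans h1).
by rewrite lee_fin; lra.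
Qed.
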